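(* Let $k\le m$ and $l\le n$ be positive integers, and let $e$ denote all-ones vectors (of length $m$ in $ke$ and of length $n$ in $le$). The class $\mathcal{C}_{m,n}(ke,le)$ is nonempty if and only if $m=pl$ and $n=pk$ for some integer $p$.
   Context: $\mathcal{C}_{m,n}(R,S)$ denotes the set of $m\times n$ $(0,1)$-matrices with row sum vector $R$ and column sum vector $S$ that are convex, i.e. in every row and every column the 1's occur in consecutive positions. Thus $\mathcal{C}_{m,n}(ke,le)$ consists of the convex $m\times n$ $(0,1)$-matrices with every row sum equal to $k$ and every column sum equal to $l$. *)

(* Defs.v *)
From mathcomp Require Import all_boot all_algebra.
Set Implicit Arguments. Unset Strict Implicit. Unset Printing Implicit Defensive.

(* A (0,1)-matrix is represented as a boolean matrix: entry true = 1. *)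

Definition row_sum m n (A : 'M[bool]_(m, n)) (i : 'I_m) : nat :=
  \sum_(j < n) (A i j : nat).
Definition col_sum m n (A : 'M[bool]_(m, n)) (j : 'I_n) : nat :=
  \sum_(i < m) (A i j : nat).

Definition row_convex m n (A : 'M[bool]_(m, n)) : Prop :=
  forall (i : 'I_m) (j1 j j2 : 'I_n),
    j1 <= j -> j <= j2 -> A i j1 -> A i j2 -> A i j.
Definition col_convex m n (A : 'M[bool]_(m, n)) : Prop :=
  forall (j : 'I_n) (i1 i i2 : 'I_m),
    i1 <= i -> i <= i2 -> A i1 j -> A i2 j -> A i j.
Definition convex m n (A : 'M[bool]_(m, n)) : Prop :=
  row_convex A /\ col_convex A.

Definition in_C m n (R : 'I_m -> nat) (S : 'I_n -> nat) (A : 'M[bool]_(m, n)) : Prop :=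
  convex A /\ (forall i, row_sum A i = R i) /\ (forall j, col_sum A j = S j).

Definition C_nonempty m n (R : 'I_m -> nat) (S : 'I_n -> nat) : Prop :=
  exists A : 'M[bool]_(m, n), in_C R S A.

(* Main.v *)
Require Import Defs.
From mathcomp Require Import all_boot all_algebra.
From mathcomp Require Import zify.

Lemma divk_eq (j k t : nat) : 0 < k -> (j %/ k == t) = (t*k <= j < t*k + k).
Proof.
move=> k0; apply/eqP/andP => [<-|[a b]].
  split; first exact: leq_divM.
  by rewrite -mulSnr; exact: ltn_ceil.
apply/eqP; rewrite eqn_leq leq_divRL // a andbT -ltnS ltn_divLR // mulSn; lia.
Qed.

Lemma sum_interval n c d :
  \sum_(j < n) ((c <= j < d) : nat) = minn n d - c.
Proof.
elim: n => [|n IH]; first by rewrite big_ord0 min0n.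
rewrite big_ord_recr /= IH.
case: (leqP c n) => h1; case: (ltnP n d) => h2 /=; lia.
Qed.

Lemma row_lemma n k (r : 'I_n -> bool) (c : 'I_n) :
  0 < k ->
  (forall j1 j j2 : 'I_n, j1 <= j -> j <= j2 -> r j1 -> r j2 -> r j) ->
  \sum_(j < n) (r j : nat) = k ->
  r c -> (forall j : 'I_n, j < c -> ~~ r j) ->
  c + k <= n /\ forall j : 'I_n, r j = (c <= j < c + k).
Proof.
move=> k0 conv hs rc hlt.
have h1 : forall j : 'I_n, r j -> j < c + k.
  move=> j rj; rewrite ltnNge; apply/negP => hj.
  have : \sum_(x < n) ((c <= x < c + k + 1) : nat) <= \sum_(x<n) (r x : nat).
    apply: leq_sum => x _; case/boolP: (c <= x < c+k+1) => //= /andP[a b].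
    rewrite (conv c x j) //; lia.
  rewrite hs sum_interval; have := ltn_ord j; lia.
have h2 : forall j : 'I_n, c <= j < c + k -> r j.
  move=> j /andP[a b]; apply/negPn/negP => nrj.
  have hy : forall y : 'I_n, r y -> y < j.
    move=> y ry; rewrite ltnNge; apply/negP => hy.
    by move/negP: nrj; apply; apply: (conv c j y).
  have : \sum_(x<n) (r x : nat) <= \sum_(x<n) ((c <= x < j) : nat).
    apply: leq_sum => x _; case/boolP: (r x) => rx //=.
    rewrite (hy x rx) andbT; case: (leqP c x) => // xc.
    by move: (hlt x xc); rewrite rx.
  rewrite hs sum_interval; have := ltn_ord j; lia.
have e : forall j : 'I_n, r j = (c <= j < c + k).
  move=> j; apply/idP/idP => [rj|]; last exact: h2.
  rewrite h1 // andbT leqNgt; apply/negP => /hlt; by rewrite rj.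
split => //.
have : \sum_(x<n) (r x : nat) = \sum_(x<n) ((c <= x < c+k) : nat).
  by apply: eq_bigr => x _; rewrite e.
rewrite hs sum_interval; lia.
Qed.

Lemma sum_strict m (f g : 'I_m -> bool) i0 :
  (forall i, f i -> g i) -> ~~ f i0 -> g i0 ->
  \sum_i (f i : nat) < \sum_i (g i : nat).
Proof.
move=> fg nf gi.
rewrite (bigD1 i0) //= [X in _ < X](bigD1 i0) //= (negbTE nf) gi add0n add1n ltnS.
apply: leq_sum => i _; case: (f i) (fg i) => // -> //.
Qed.

Definition Inv m n k (A : 'M[bool]_(m, n)) t :=
  forall (i : 'I_m) (j : 'I_n), j < t * k -> A i j ->
    forall j' : 'I_n, A i j' = (j' %/ k == j %/ k).
Arguments Inv {m n} k A t.

Lemma inv_step m n k l (A : 'M[bool]_(m, n)) t :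
  0 < k -> 0 < l -> row_convex A -> (forall i, row_sum A i = k) ->
  (forall j, col_sum A j = l) ->
  Inv k A t -> t * k < n -> t * k + k <= n /\ Inv k A t.+1.
Proof.
move=> k0 l0 rconv rs cs I tn.
pose c : 'I_n := Ordinal tn.
have rowc : forall i, A i c ->
    t*k + k <= n /\ forall j' : 'I_n, A i j' = (t*k <= j' < t*k + k).
  move=> i aic.
  apply: (@row_lemma n k (fun j => A i j) c) => //.
  - by move=> j1 j j2; exact: rconv.
  - exact: rs i.
  - move=> j hj; apply/negP => aij.
    have := I i j hj aij c; rewrite aic => /esym/eqP.
    rewrite /= mulnK // => ht.
    by move: hj; rewrite -ltn_divLR // ht ltnn.
have [i0 ai0] : exists i, A i c.
  case: (pickP (fun i => A i c)) => [i0 h|h]; first by exists i0.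
  have := cs c; rewrite /col_sum big1 => [|i _]; last by rewrite h.
  lia.
have [hn _] := rowc i0 ai0.
split => // i j hj aij j'.
case: (ltnP j (t*k)) => hjt; first exact: I.
have hjc : j < t*k + k by move: hj; rewrite mulSn; lia.
have aic : A i c.
  apply/negPn/negP => naic.
  have : \sum_(i < m) (A i c : nat) < \sum_(i < m) (A i j : nat).
    apply: (@sum_strict m (fun i => A i c) (fun i => A i j) i) => // i' ai'.
    have [_ e] := rowc i' ai'; rewrite e hjc andbT //.
  by have := cs c; have := cs j; rewrite /col_sum => -> ->; rewrite ltnn.
have [_ e] := rowc i aic.
rewrite e.
have -> : j %/ k = t by apply/eqP; rewrite divk_eq // hjt.
by rewrite divk_eq.
Qed.

Arguments inv_step {m n k l A t}.

Lemma div_cols m n k l (A : 'M[bool]_(m, n)) :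
  0 < k -> 0 < l -> row_convex A -> (forall i, row_sum A i = k) ->
  (forall j, col_sum A j = l) -> k %| n.
Proof.
move=> k0 l0 rconv rs cs.
have all : forall t, t * k <= n -> Inv k A t.
  elim => [|t IH] h.
    by move=> i j; rewrite mul0n.
  have tn : t * k < n by move: h; rewrite mulSn; lia.
  by have [_ ] := inv_step k0 l0 rconv rs cs (IH (ltnW tn)) tn.
have h := leq_divM n k.
have I := all _ h.
case: (ltnP (n %/ k * k) n) => hlt.
  have [h2 _] := inv_step k0 l0 rconv rs cs I hlt.
  have := ltn_ceil n k0; rewrite mulSn; lia.
apply/dvdnP; exists (n %/ k); apply/eqP; rewrite eqn_leq h hlt //.
Qed.

Arguments div_cols {m n k l A}.

Theorem mainTheorem6 (m n k l : nat) :
  0 < k -> k <= m -> 0 < l -> l <= n ->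
  (C_nonempty (fun _ : 'I_m => k) (fun _ : 'I_n => l) <->
   exists p : nat, m = p * l /\ n = p * k).
Proof.
move=> k0 km l0 ln; split.
  move=> [A [[rc cc] [rs cs]]].
  have hk := div_cols k0 l0 rc rs cs.
  have rcT : row_convex A^T.
    by move=> i j1 j j2 a b; rewrite !mxE; exact: cc.
  have rsT : forall i, row_sum A^T i = l.
    move=> i; rewrite /row_sum -(cs i) /col_sum.
    by apply: eq_bigr => j _; rewrite mxE.
  have csT : forall j, col_sum A^T j = k.
    move=> j; rewrite /col_sum -(rs j) /row_sum.
    by apply: eq_bigr => i _; rewrite mxE.
  have hl := div_cols l0 k0 rcT rsT csT.
  have dc : \sum_(i < m) row_sum A i = \sum_(j < n) col_sum A j.
    by rewrite /row_sum /col_sum; exact: exchange_big.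
  have e1 : \sum_(i < m) row_sum A i = \sum_(i < m) k by apply: eq_bigr.
  have e2 : \sum_(j < n) col_sum A j = \sum_(j < n) l by apply: eq_bigr.
  rewrite e1 e2 !big_const_ord !iter_addn_0 in dc.
  case/dvdnP: hk => q hq; case/dvdnP: hl => p hp.
  exists q; split => //.
  move: dc; rewrite hp hq => dc.
  nia.
move=> [p [em en]].
exists (\matrix_(i < m, j < n) ((i %/ l)%N == (j %/ k)%N))%R.
split; [split|split].
- move=> i j1 j j2 a b; rewrite !mxE => /eqP e1 /eqP e2; apply/eqP.
  have := leq_div2r k a; have := leq_div2r k b; lia.
- move=> j i1 i i2 a b; rewrite !mxE => /eqP e1 /eqP e2; apply/eqP.
  have := leq_div2r l a; have := leq_div2r l b; lia.
- move=> i; rewrite /row_sum.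
  under eq_bigr do rewrite mxE eq_sym (divk_eq _ _ _ k0).
  rewrite sum_interval.
  have : i %/ l < p by rewrite ltn_divLR // -em.
  move=> h; have : i %/ l * k + k <= p * k by rewrite -mulSnr leq_mul2r h orbT.
  lia.
- move=> j; rewrite /col_sum.
  under eq_bigr do rewrite mxE (divk_eq _ _ _ l0).
  rewrite sum_interval.
  have : j %/ k < p by rewrite ltn_divLR // -en.
  move=> h; have : j %/ k * l + l <= p * l by rewrite -mulSnr leq_mul2r h orbT.
  lia.
Qed.
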